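(* In the setting below, suppose $n\ge 3$ and let $p,q\in X$ with $S_p\cup S_q=E$ and $S_p\cap S_q=\{e_k\}$. If $|S_p|\ge 3$ and $|S_q|\ge 3$, then any strange index of $p$ or of $q$ equals $e_k$. If $|S_p|=2$, then any strange index of $q$ equals $e_k$.
   Context: Setting: $E=\{e_0,\dots,e_n\}\subset\mathbb R^n$ is the vertex set of an $n$-simplex with $e_0+\cdots+e_n=0$, and $X\subset\mathbb R^n\setminus\{0\}$ is a finite set with $E\subseteq X$, no element of $X$ a positive multiple of another, such that every $n+1$ points of $X$ are in good position. (A finite set $A$ is in conical position if $0\notin\operatorname{conv}A$ and no point of $A$ lies in the positive hull—set of nonnegative linear combinations—of the other points; it is in good position otherwise.) For $p\in X$, the support $S_p$ is the minimal subset of $E$ whose positive hull contains $p$; then $p=\sum_{e_i\in S_p}\lambda_ie_i$ uniquely with all $\lambda_i>0$. Convention: each $p\in X$ is replaced by the positive multiple for which $\min_{e_i\in S_p}\lambda_i=1$. An element $e_j\in S_p$ is a strange index of $p$ if $\lambda_j>1$ (under these hypotheses there is at most one). *)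

(* Defs.v *)
(* Vectors of R^n are row vectors 'rV[R]_n over an arbitrary
   real field R (the statement is purely linear-algebraic / order-theoretic). *)
From HB Require Import structures.
From mathcomp Require Import all_boot all_order all_algebra.
Set Implicit Arguments. Unset Strict Implicit. Unset Printing Implicit Defensive.
Import Order.TTheory GRing.Theory Num.Theory.
Local Open Scope ring_scope.

Section Defs.
Variables (R : realFieldType) (n : nat).
Local Notation V := 'rV[R]_n.

Definition affinely_independent (e : 'I_n.+1 -> V) : Prop :=
  forall c : 'I_n.+1 -> R,
    \sum_(i < n.+1) c i = 0 -> \sum_(i < n.+1) c i *: e i = 0 ->
    forall i, c i = 0.

Definition in_conv (A : seq V) (v : V) : Prop :=
  exists c : V -> R, (forall x, x \in A -> 0 <= c x) /\
    \sum_(x <- A) c x = 1 /\ v = \sum_(x <- A) c x *: x.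

Definition in_pos_hull (B : seq V) (v : V) : Prop :=
  exists c : V -> R, (forall x, x \in B -> 0 <= c x) /\
    v = \sum_(x <- B) c x *: x.

(* conical position of a finite set A (A given as a duplicate-free seq);
   rem a A is A \ {a}. *)
Definition conical_position (A : seq V) : Prop :=
  ~ in_conv A 0 /\ (forall a, a \in A -> ~ in_pos_hull (rem a A) a).

Definition good_position (A : seq V) : Prop := ~ conical_position A.

Definition in_pos_hull_E (e : 'I_n.+1 -> V) (S : {set 'I_n.+1}) (v : V) : Prop :=
  exists l : 'I_n.+1 -> R, (forall i, i \in S -> 0 <= l i) /\
    v = \sum_(i in S) l i *: e i.

Definition is_support (e : 'I_n.+1 -> V) (p : V) (S : {set 'I_n.+1}) : Prop :=
  in_pos_hull_E e S p /\
  (forall S' : {set 'I_n.+1}, S' \proper S -> ~ in_pos_hull_E e S' p).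

(* e_j is a strange index of p: after replacing p by the positive multiple
   c p whose (positive) coefficients l_i on its support S_p have minimum 1,
   the coefficient l_j exceeds 1. *)
Definition strange_index (e : 'I_n.+1 -> V) (p : V) (j : 'I_n.+1) : Prop :=
  exists (S : {set 'I_n.+1}) (c : R) (l : 'I_n.+1 -> R),
    [/\ is_support e p S, j \in S, 0 < c,
        (forall i, i \in S -> 0 < l i) &
        c *: p = \sum_(i in S) l i *: e i] /\
    (forall i, i \in S -> 1 <= l i) /\ (exists2 i, i \in S & l i = 1) /\
    1 < l j.

Definition setting (e : 'I_n.+1 -> V) (X : seq V) : Prop :=
  [/\ affinely_independent e /\ \sum_(i < n.+1) e i = 0,
      (forall i, e i \in X), ~~ ((0 : V) \in X),
      (forall x y, x \in X -> y \in X -> x != y ->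
          forall t : R, 0 < t -> x != t *: y) &
      (forall A : seq V, uniq A -> size A = n.+1 -> {subset A <= X} ->
          good_position A)].

End Defs.

(* Main.v *)
Require Import Defs.
From HB Require Import structures.
From mathcomp Require Import all_boot all_order all_algebra.
From mathcomp Require Import lra zify.
Import Order.TTheory GRing.Theory Num.Theory.
Local Open Scope ring_scope.
Set Implicit Arguments. Unset Strict Implicit.

Section Aux.
Variables (R : realFieldType) (n : nat) (e : 'I_n.+1 -> 'rV[R]_n).
Hypothesis hai : affinely_independent e.
Hypothesis hs : \sum_(i < n.+1) e i = 0.

Lemma coord0 (w : 'I_n.+1 -> R) :
  \sum_i w i *: e i = 0 -> forall u v, w u = w v.
Proof.
move=> hw u v.
set m := (\sum_i w i) / (n.+1)%:R.
have hn : (n.+1)%:R != 0 :> R by rewrite pnatr_eq0.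
have H := hai (c := fun i => w i - m).
have h1 : \sum_(i < n.+1) (w i - m) = 0.
  rewrite sumrB sumr_const card_ord -mulr_natr /m divfK //; by rewrite subrr.
have h2 : \sum_(i < n.+1) (w i - m) *: e i = 0.
  under eq_bigr => i _ do rewrite scalerBl.
  by rewrite sumrB hw -scaler_sumr hs scaler0 subrr.
have := H h1 h2 u; have := H h1 h2 v => /eqP; rewrite subr_eq0 => /eqP ->.
by move/eqP; rewrite subr_eq0 => /eqP.
Qed.

Definition ext (S : {set 'I_n.+1}) (l : 'I_n.+1 -> R) i := if i \in S then l i else 0.

Lemma sum_ext (S : {set 'I_n.+1}) l : \sum_(i in S) l i *: e i = \sum_i ext S l i *: e i.
Proof.
rewrite big_mkcond /=; apply: eq_bigr => i _; rewrite /ext.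
by case: (i \in S) => //; rewrite scale0r.
Qed.

Lemma e_inj : injective e.
Proof.
move=> u v huv; apply/eqP; apply/negPn/negP => nuv.
have := coord0 (w := fun i => (i == u)%:R - (i == v)%:R) _ u v.
rewrite !eqxx (negbTE nuv) eq_sym (negbTE nuv) /=.
have -> : (1 - 0 : R) = 1 by rewrite subr0.
have -> : (0 - 1 : R) = -1 by rewrite sub0r.
move=> H; suff : (1 : R) = -1 by move=> /eqP; rewrite -subr_eq0 opprK (_ : 1 + 1 = 2%:R) // pnatr_eq0.
apply: H.
under eq_bigr => i _ do rewrite scalerBl.
rewrite sumrB (bigD1 u) //= eqxx big1 => [|i /negbTE ->]; last by rewrite scale0r.
rewrite (bigD1 v) //= eqxx big1 => [|i /negbTE ->]; last by rewrite scale0r.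
by rewrite !scale1r !addr0 huv subrr.
Qed.

Lemma support_pos v S : is_support e v S ->
  exists l, (forall i, i \in S -> 0 < l i) /\ v = \sum_(i in S) l i *: e i.
Proof.
case=> [[l [l0 hv]] hmin]; exists l; split => // i iS.
rewrite lt0r l0 // andbT; apply/negP => /eqP li0.
apply: (hmin (S :\ i)); first by apply: properD1.
exists l; split => [x /setD1P [] _ /l0 //|].
by rewrite hv (bigD1 i) //= li0 scale0r add0r; apply: eq_bigl => x; rewrite !inE andbC.
Qed.

Lemma support_notT v S : is_support e v S -> exists o, o \notin S.
Proof.
move=> sv; case: (sv) => _ hmin.
case: (pickP (fun o => o \notin S)) => [o ho|h]; first by exists o.
have ST : S = setT by apply/setP => i; move: (h i) => /= /negbFE ->; rewrite inE.
have [l [l0 hv]] := support_pos sv.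
case: (@arg_minP _ _ 'I_n.+1 ord0 xpredT l isT) => m _ hm.
exfalso; apply: (hmin (S :\ m)); first by apply: properD1; rewrite ST inE.
exists (fun i => l i - l m); split.
  by move=> x _; rewrite subr_ge0 hm.
rewrite hv ST.
have -> : \sum_(i in [set: 'I_n.+1] :\ m) (l i - l m) *: e i
   = \sum_(i < n.+1) (l i - l m) *: e i.
  rewrite [RHS](bigD1 m) //= subrr scale0r add0r; apply: eq_bigl => x; by rewrite !inE andbT.
under [RHS]eq_bigr => i _ do rewrite scalerBl.
rewrite sumrB -scaler_sumr hs scaler0 subr0.
by apply: eq_bigl => x; rewrite inE.
Qed.


Lemma ext_ge0 (S : {set 'I_n.+1}) l : (forall i, i \in S -> 0 < l i) -> forall i, 0 <= ext S l i.
Proof. by move=> h i; rewrite /ext; case: ifP => // /h /ltW. Qed.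

Lemma support_uniq v S1 S2 : is_support e v S1 -> is_support e v S2 -> S1 = S2.
Proof.
move=> s1 s2.
have [l1 [p1 h1]] := support_pos s1; have [l2 [p2 h2]] := support_pos s2.
have [o1 no1] := support_notT s1; have [o2 no2] := support_notT s2.
pose w i := ext S1 l1 i - ext S2 l2 i.
have hw : \sum_i w i *: e i = 0.
  under eq_bigr => i _ do rewrite scalerBl.
  by rewrite sumrB -!sum_ext -h1 -h2 subrr.
have hc := coord0 hw.
have w0 : forall i, w i = 0.
  move=> i; have := hc i o1; have := hc i o2.
  have e1 := ext_ge0 p1 o2; have e2 := ext_ge0 p2 o1; move: e1 e2; rewrite /w /ext (negbTE no1) (negbTE no2); lra.
apply/setP => i; move: (w0 i); rewrite /w /ext.
case: (boolP (i \in S1)) => i1; case: (boolP (i \in S2)) => i2 //.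
  by move: (p1 _ i1); rewrite subr0 => /lt0r_neq0 /eqP.
by move: (p2 _ i2); rewrite sub0r; move=> h /eqP; rewrite oppr_eq0 => /eqP h0; move: h; rewrite h0 ltxx.
Qed.

Lemma conical_crit (A : seq 'rV[R]_n) : uniq A ->
  (forall (c : 'rV[R]_n -> R) x0, (forall x, x \in A -> x != x0 -> 0 <= c x) ->
     \sum_(x <- A) c x *: x = 0 -> forall x, x \in A -> c x = 0) ->
  conical_position A.
Proof.
move=> uA H; split.
  case=> c [c0 [c1 hc]].
  have := H c 0 (fun x xA _ => c0 x xA) (esym hc).
  move=> h; move: c1; rewrite big_seq big1 => [|x /h //].
  by move/eqP; rewrite eq_sym oner_eq0.
move=> a aA [c [c0 hc]].
pose c' x := if x == a then -1 else c x.
have := H c' a.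
have h1 : forall x, x \in A -> x != a -> 0 <= c' x.
  move=> x xA xa; rewrite /c' (negbTE xa); apply: c0.
  by rewrite (mem_rem_uniq _ uA) inE xa.
have h2 : \sum_(x <- A) c' x *: x = 0.
  rewrite (perm_big _ (perm_to_rem aA)) big_cons /c' eqxx scaleN1r.
  rewrite big_seq_cond (eq_bigr (fun x => c x *: x)); last first.
    move=> x /andP [] xr _; move: xr; rewrite (mem_rem_uniq _ uA) inE => /andP [] /negbTE -> //.
  by rewrite -big_seq_cond -hc; apply: addNr.
move=> /(_ h1 h2 a aA); rewrite /c' eqxx => /eqP; rewrite oppr_eq0 oner_eq0 //.
Qed.


Lemma conical1 p q (S S' : {set 'I_n.+1}) (c0 : R) l mu a b j k :
  0 < c0 -> c0 *: p = \sum_(i in S) l i *: e i ->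
  (forall i, i \in S -> 0 < l i) ->
  q = \sum_(i in S') mu i *: e i -> (forall i, i \in S' -> 0 < mu i) ->
  a \in S -> a \notin S' -> b \in S' -> b \notin S -> j \in S -> j \notin S' ->
  k \in S -> k \in S' -> l a < l j -> l a <= l k ->
  uniq (p :: q :: [seq e i | i <- enum (~: [set a; b])]) ->
  conical_position (p :: q :: [seq e i | i <- enum (~: [set a; b])]).
Proof.
move=> c0p hp lpos hq mpos aS aS' bS' bS jS jS' kS kS' laj lak uA.
set T := ~: [set a; b].
have aT : (a \in T) = false by rewrite !inE eqxx.
have bT : (b \in T) = false by rewrite !inE eqxx orbT.
have jT : j \in T.
  rewrite !inE negb_or; apply/andP; split; apply/eqP => ej.
    by move: laj; rewrite ej ltxx.
  by move: bS; rewrite -ej jS.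
have kT : k \in T.
  rewrite !inE negb_or; apply/andP; split; apply/eqP => ek.
    by move: aS'; rewrite -ek kS'.
  by move: bS; rewrite -ek kS.
have jk : j != k by apply/eqP => ejk; move: jS'; rewrite ejk kS'.
move: (uA); rewrite /= !inE negb_or => /andP [] /andP [] pq pT /andP [] qT _.
have pe : forall i, i \in T -> p != e i.
  by move=> i iT; apply/eqP => pei; move: pT; rewrite pei map_f // mem_enum.
have qe : forall i, i \in T -> q != e i.
  by move=> i iT; apply/eqP => qei; move: qT; rewrite qei map_f // mem_enum.
apply: conical_crit => // c x0 hpos hsum.
have c0n : c0 != 0 by rewrite gt_eqF.
set P := c p / c0.
have cpP : c p = P * c0 by rewrite /P divfK.
pose w i := P * ext S l i + c q * ext S' mu i + ext T (fun i => c (e i)) i.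
have hw : \sum_i w i *: e i = 0.
  apply: etrans _ hsum; rewrite !big_cons big_map big_enum /= addrA.
  under eq_bigr => i _ do rewrite !scalerDl.
  rewrite !big_split /= sum_ext; congr (_ + _ + _).
    under eq_bigr => i _ do rewrite -scalerA.
    by rewrite -scaler_sumr -sum_ext -hp scalerA cpP.
  under eq_bigr => i _ do rewrite -scalerA.
  by rewrite -scaler_sumr -sum_ext -hq.
have hc := coord0 hw.
have wa : w a = P * l a by rewrite /w /ext aS (negbTE aS') aT mulr0 !addr0.
have wb : w b = c q * mu b by rewrite /w /ext bS' (negbTE bS) bT mulr0 add0r addr0.
have wj : w j = P * l j + c (e j) by rewrite /w /ext jS (negbTE jS') jT mulr0 addr0.
have wk : w k = P * l k + c q * mu k + c (e k) by rewrite /w /ext kS kS' kT.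
have la0 := lpos _ aS; have mb0 := mpos _ bS'; have mk0 := mpos _ kS'.
have [P0 cq0] : P = 0 /\ c q = 0.
  have hab := hc a b; have haj := hc a j; have hak := hc a k.
  rewrite wa wb in hab; rewrite wa wj in haj; rewrite wa wk in hak.
  have Pge : p != x0 -> 0 <= P.
    by move=> /(hpos p (mem_head _ _)); rewrite cpP pmulr_lge0.
  have cqge : q != x0 -> 0 <= c q.
    by apply: hpos; rewrite !inE eqxx orbT.
  have cjge : e j != x0 -> 0 <= c (e j).
    by apply: hpos; rewrite !inE map_f ?orbT // mem_enum.
  have ckge : e k != x0 -> 0 <= c (e k).
    by apply: hpos; rewrite !inE map_f ?orbT // mem_enum.
  case: (eqVneq x0 (e j)) => [x0j|x0j].
    have hP : 0 <= P by apply: Pge; rewrite x0j pe.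
    have hq0 : 0 <= c q by apply: cqge; rewrite x0j qe.
    have hk : 0 <= c (e k).
      by apply: ckge; rewrite x0j; apply/eqP => /e_inj ekj; move: jk; rewrite ekj eqxx.
    have hlk : 0 <= P * (l k - l a) by rewrite mulr_ge0 // subr_ge0.
    have cq0 : c q = 0.
      apply/eqP; rewrite eq_le hq0 andbT.
      have : c q * mu k <= 0 by nra.
      by rewrite pmulr_lle0.
    split => //; move: hab; rewrite cq0 mul0r => /eqP; rewrite mulf_eq0 => /orP [/eqP //|].
    by rewrite gt_eqF.
  have hj : 0 <= c (e j) by apply: cjge; rewrite eq_sym.
  have hP : 0 <= P.
    case: (eqVneq p x0) => [px0|]; last exact: Pge.
    have hq0 : 0 <= c q by apply: cqge; rewrite -px0 eq_sym.
    have : 0 <= P * l a by rewrite hab mulr_ge0 // ltW.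
    by rewrite pmulr_lge0.
  have P0 : P = 0.
    apply/eqP; rewrite eq_le hP andbT.
    have : P * (l j - l a) <= 0 by nra.
    by rewrite pmulr_lle0 // subr_gt0.
  split => //; move: hab; rewrite P0 mul0r => /esym /eqP; rewrite mulf_eq0 => /orP [/eqP //|].
  by rewrite gt_eqF.
have wi0 : forall i, w i = 0 by move=> i; rewrite (hc i a) wa P0 mul0r.
move=> x; rewrite !inE => /orP [/eqP -> | /orP [/eqP -> // | /mapP [i]]].
  by rewrite cpP P0 mul0r.
rewrite mem_enum => iT ->.
by move: (wi0 i); rewrite /w P0 cq0 !mul0r !add0r /ext iT.
Qed.



Lemma conical2 p (S : {set 'I_n.+1}) (c0 : R) l m j a o :
  0 < c0 -> c0 *: p = \sum_(i in S) l i *: e i ->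
  (forall i, i \in S -> 0 < l i) ->
  m \in S -> j \in S -> a \in S -> o \notin S -> j != a ->
  l m < l j -> l m < l a ->
  uniq (p :: [seq e i | i <- enum (~: [set m])]) ->
  conical_position (p :: [seq e i | i <- enum (~: [set m])]).
Proof.
move=> c0p hp lpos mS jS aS oS ja lmj lma uA.
set T := ~: [set m].
have mT : (m \in T) = false by rewrite !inE eqxx.
have jT : j \in T by rewrite !inE; apply/eqP => ej; move: lmj; rewrite ej ltxx.
have aT : a \in T by rewrite !inE; apply/eqP => ej; move: lma; rewrite ej ltxx.
have oT : o \in T by rewrite !inE; apply/eqP => ej; move: oS; rewrite ej mS.
move: (uA); rewrite /= => /andP [] pT _.
have pe : forall i, i \in T -> p != e i.
  by move=> i iT; apply/eqP => pei; move: pT; rewrite pei map_f // mem_enum.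
apply: conical_crit => // c x0 hpos hsum.
have c0n : c0 != 0 by rewrite gt_eqF.
set P := c p / c0.
have cpP : c p = P * c0 by rewrite /P divfK.
pose w i := P * ext S l i + ext T (fun i => c (e i)) i.
have hw : \sum_i w i *: e i = 0.
  apply: etrans _ hsum; rewrite !big_cons big_map big_enum /=.
  under eq_bigr => i _ do rewrite !scalerDl.
  rewrite !big_split /= sum_ext; congr (_ + _).
  under eq_bigr => i _ do rewrite -scalerA.
  by rewrite -scaler_sumr -sum_ext -hp scalerA cpP.
have hc := coord0 hw.
have wm : w m = P * l m by rewrite /w /ext mS mT addr0.
have wo : w o = c (e o) by rewrite /w /ext (negbTE oS) oT mulr0 add0r.
have wj : w j = P * l j + c (e j) by rewrite /w /ext jS jT.
have wa : w a = P * l a + c (e a) by rewrite /w /ext aS aT.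
have lm0 := lpos _ mS.
have P0 : P = 0.
  have hmo := hc m o; have hmj := hc m j; have hma := hc m a.
  rewrite wm wo in hmo; rewrite wm wj in hmj; rewrite wm wa in hma.
  have Pge : p != x0 -> 0 <= P.
    by move=> /(hpos p (mem_head _ _)); rewrite cpP pmulr_lge0.
  have cige : forall i, i \in T -> e i != x0 -> 0 <= c (e i).
    by move=> i iT; apply: hpos; rewrite !inE map_f ?orbT // mem_enum.
  case: (eqVneq x0 (e j)) => [x0j|x0j].
    have hP : 0 <= P by apply: Pge; rewrite x0j pe.
    have ha : 0 <= c (e a).
      by apply: cige => //; rewrite x0j; apply/eqP => /e_inj eaj; move: ja; rewrite eaj eqxx.
    apply/eqP; rewrite eq_le hP andbT.
    have : P * (l a - l m) <= 0 by nra.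
    by rewrite pmulr_lle0 // subr_gt0.
  have hj : 0 <= c (e j) by apply: cige; rewrite // eq_sym.
  have hP : 0 <= P.
    case: (eqVneq p x0) => [px0|]; last exact: Pge.
    have ho : 0 <= c (e o) by apply: cige; rewrite // -px0 eq_sym pe.
    have : 0 <= P * l m by rewrite hmo.
    by rewrite pmulr_lge0.
  apply/eqP; rewrite eq_le hP andbT.
  have : P * (l j - l m) <= 0 by nra.
  by rewrite pmulr_lle0 // subr_gt0.
have wi0 : forall i, w i = 0 by move=> i; rewrite (hc i m) wm P0 mul0r.
move=> x; rewrite !inE => /orP [/eqP -> | /mapP [i]].
  by rewrite cpP P0 mul0r.
rewrite mem_enum => iT ->.
by move: (wi0 i); rewrite /w P0 !mul0r !add0r /ext iT.
Qed.


Lemma support_single i : e i != 0 -> is_support e (e i) [set i].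
Proof.
move=> ei0; split.
  by exists (fun _ => 1); split => // ; rewrite big_set1 scale1r.
move=> S' /proper_card; rewrite cards1 ltnS leqn0 => /eqP /cards0_eq ->.
by case=> l [_]; rewrite big_set0 => /eqP; rewrite (negbTE ei0).
Qed.

End Aux.

Lemma core (R : realFieldType) (n : nat) (e : 'I_n.+1 -> 'rV[R]_n) (X : seq 'rV[R]_n)
    (p q : 'rV[R]_n) (S S' : {set 'I_n.+1}) (k j : 'I_n.+1) :
  setting e X -> (3 <= n)%N -> p \in X -> q \in X ->
  is_support e p S -> is_support e q S' ->
  S :|: S' = [set: 'I_n.+1] -> S :&: S' = [set k] -> (3 <= #|S|)%N ->
  strange_index e p j -> j = k.
Proof.
case=> [[hai hs] eX X0 _ hgood] n3 pX qX sp sq hU hI h3.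
case=> [S1 [c0 [l [[sup1 jS1 c0p lpos hp] [lge1 [[i0 i0S li0] lj]]]]]].
have S1S := support_uniq hai hs sup1 sp; subst S1.
apply/eqP; apply/negPn/negP => jk.
have [mu [mpos hq]] := support_pos sq.
have [b bS] := support_notT hs sp.
have bS' : b \in S' by move: (in_setT b); rewrite -hU inE (negbTE bS).
have kS : k \in S by move: (set11 k); rewrite -hI inE => /andP [].
have kS' : k \in S' by move: (set11 k); rewrite -hI inE => /andP [].
have notS' : forall x, x \in S -> x != k -> x \notin S'.
  move=> x xS xk; apply/negP => xS'.
  have xI : x \in S :&: S' by rewrite inE xS xS'.
  by move: xI xk; rewrite hI inE => ->.
have jS' := notS' _ jS1 jk.
have bk : b != k by apply/eqP => bk; move: bS; rewrite bk kS.
have e0 : forall i, e i != 0 by move=> i; apply/eqP => h; move: X0; rewrite -h eX.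
have pe : forall i, p != e i.
  move=> i; apply/eqP => pei; rewrite pei in sp.
  have := support_uniq hai hs sp (support_single (e0 i)); move=> Si.
  by move: h3; rewrite Si cards1.
have qe : forall i, q != e i.
  move=> i; apply/eqP => qei; rewrite qei in sq.
  have := support_uniq hai hs sq (support_single (e0 i)); move=> Si.
  by move: bk bS' kS'; rewrite Si !inE => /eqP bk /eqP bi /eqP ki; apply: bk; rewrite bi ki.
have pq : p != q.
  apply/eqP => epq; rewrite -epq in sq.
  have SS := support_uniq hai hs sp sq; rewrite -SS setIid in hI.
  by move: h3; rewrite hI cards1.
have emap : forall (T : {set 'I_n.+1}) x, x \in [seq e i | i <- enum T] -> exists i, x = e i.
  by move=> T x /mapP [i _ ->]; exists i.
have umap : forall T : {set 'I_n.+1}, uniq [seq e i | i <- enum T].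
  by move=> T; rewrite map_inj_uniq ?enum_uniq //; apply: (e_inj hai hs).
have subX : forall (T : {set 'I_n.+1}) x, x \in [seq e i | i <- enum T] -> x \in X.
  by move=> T x /emap [i ->].
case: (pickP [pred a | [&& a \in S, a != j, a != k & l a == 1]]) => [a /and4P [aS aj ak /eqP la1]|none].
  set A := p :: q :: [seq e i | i <- enum (~: [set a; b])].
  have uA : uniq A.
    rewrite /A /= umap !inE negb_or pq /= andbT.
    apply/andP; split; apply/negP => /emap [i] /eqP; [exact/negP/pe|exact/negP/qe].
  have ab : a != b by apply/eqP => ab; move: bS; rewrite -ab aS.
  apply: (hgood A uA).
  - rewrite /A /= size_map -cardE; have := cardsC [set a; b]; rewrite cards2 ab card_ord /=; by move=> h; exact: h.
  - by move=> x; rewrite !inE => /orP [/eqP -> // | /orP [/eqP -> // | /subX]].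
  apply: (conical1 hai hs c0p hp lpos hq mpos aS (notS' _ aS ak) bS' bS jS1 jS' kS kS').
  - by rewrite la1.
  - by rewrite la1 lge1.
  - exact: uA.
have [a [aS aj ak]] : exists a, [/\ a \in S, a != j & a != k].
  have : (0 < #|S :\ j :\ k|)%N.
    move: h3; rewrite (cardsD1 j S) jS1 (cardsD1 k (S :\ j)) !inE eq_sym jk kS /=; by rewrite !add1n !ltnS.
  by case/card_gt0P => a; rewrite !inE => /and3P [ak aj aS]; exists a.
have la : 1 < l a.
  rewrite lt_neqAle lge1 // andbT eq_sym; apply/negP => /eqP la1.
  by move: (none a) => /=; rewrite aS aj ak la1 eqxx.
have i0j : i0 != j by apply/eqP => ij; move: lj; rewrite -ij li0 ltxx.
set A := p :: [seq e i | i <- enum (~: [set i0])].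
have uA : uniq A.
  by rewrite /A /= umap andbT; apply/negP => /emap [i] /eqP; apply/negP/pe.
apply: (hgood A uA).
- rewrite /A /= size_map -cardE; have := cardsC [set i0]; rewrite cards1 card_ord /=; by move=> h; exact: h.
- by move=> x; rewrite !inE => /orP [/eqP -> // | /subX].
apply: (conical2 hai hs c0p hp lpos i0S jS1 aS bS).
- by rewrite eq_sym.
- by rewrite li0.
- by rewrite li0.
- exact: uA.
Qed.



Unset Implicit Arguments.
Theorem proposition6p6 (R : realFieldType) (n : nat)
    (e : 'I_n.+1 -> 'rV[R]_n) (X : seq 'rV[R]_n)
    (p q : 'rV[R]_n) (Sp Sq : {set 'I_n.+1}) (k : 'I_n.+1) :
  setting e X -> (3 <= n)%N ->
  p \in X -> q \in X ->
  is_support e p Sp -> is_support e q Sq ->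
  Sp :|: Sq = [set: 'I_n.+1] -> Sp :&: Sq = [set k] ->
  (((3 <= #|Sp|)%N -> (3 <= #|Sq|)%N ->
      (forall j : 'I_n.+1, strange_index e p j -> j = k) /\
      (forall j : 'I_n.+1, strange_index e q j -> j = k)) /\
   (#|Sp| = 2%N -> forall j : 'I_n.+1, strange_index e q j -> j = k)).
Proof.
move=> hset n3 pX qX sp sq hU hI; split.
  move=> hp3 hq3; split => j hj.
    exact: (core hset n3 pX qX sp sq hU hI hp3 hj).
  by apply: (core hset n3 qX pX sq sp _ _ hq3 hj); rewrite 1?setUC 1?setIC.
move=> h2 j hj; apply: (core hset n3 qX pX sq sp _ _ _ hj); rewrite 1?setUC 1?setIC //.
have := cardsUI Sp Sq; rewrite hU hI cards1 cardsT card_ord h2 => h.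
by move: h; rewrite addn1 add2n => -[<-].
Qed.
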